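(* Let $s\ge r\ge 2$, let $Q$ be an $s$-vertex $r$-graph and let $H$ be an $n$-vertex $r$-graph ($n\ge s$) with $\mathcal N(Q,H)>0$. Then the function $$f_{Q,H}(p)=\left(\frac{\lambda^{(p)}(Q,H)}{s!\,\mathcal N(Q,H)}\right)^{p}$$ is non-increasing on $[1,\infty)$.
   Context: An $r$-graph ($r\ge 2$) is a finite hypergraph all of whose edges have exactly $r$ vertices. For $I\subseteq V(H)$, $H[I]$ denotes the induced subhypergraph on $I$. For an $s$-vertex $r$-graph $Q$ and an $r$-graph $H$, $\mathcal N(Q,H)$ is the number of (not necessarily induced) subgraphs of $H$ isomorphic to $Q$. For an $n$-vertex $r$-graph $H$ with vertex set $[n]$ and $\mathbf x\in\mathbb R^n$, $P_{Q,H}(\mathbf x)=s!\sum_{\{i_1,\dots,i_s\}\in\binom{[n]}{s}}\mathcal N(Q,H[\{i_1,\dots,i_s\}])\,x_{i_1}\cdots x_{i_s}$, and for $p\ge1$, $\lambda^{(p)}(Q,H)=\max_{\|\mathbf x\|_p=1}P_{Q,H}(\mathbf x)$. *)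

(* Defs.v *)
From HB Require Import structures.
From mathcomp Require Import all_boot all_order all_algebra.
From mathcomp Require Import all_classical all_reals all_analysis.
Set Implicit Arguments. Unset Strict Implicit. Unset Printing Implicit Defensive.
Import Order.TTheory GRing.Theory Num.Theory.
Local Open Scope ring_scope.

Definition is_rgraph (r m : nat) (E : {set {set 'I_m}}) : Prop :=
  forall e, e \in E -> #|e| = r.

Definition copy_of (s n : nat) (EQ : {set {set 'I_s}}) (phi : {ffun 'I_s -> 'I_n})
  : {set 'I_n} * {set {set 'I_n}} :=
  (phi @: [set: 'I_s], [set (phi @: (e : {set 'I_s})) | e in EQ]).

(* Number of (not necessarily induced) subgraphs of the host hypergraph with
   vertex set V and edge set EH that are isomorphic to Q = ('I_s, EQ):
   the number of distinct pairs (vertex set, edge set) arising as images of Q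
   under injective maps phi whose vertex image lies in V and which send every
   edge of Q to an edge of the host. *)
Definition Ncopies (s n : nat) (EQ : {set {set 'I_s}})
  (V : {set 'I_n}) (EH : {set {set 'I_n}}) : nat :=
  #|[set copy_of EQ phi | phi : {ffun 'I_s -> 'I_n} &
      [&& injectiveb phi, phi @: [set: 'I_s] \subset V &
          [forall e in EQ, (phi @: e) \in EH]]]|.

Definition NQH (s n : nat) (EQ : {set {set 'I_s}}) (EH : {set {set 'I_n}}) : nat :=
  Ncopies EQ [set: 'I_n] EH.

Definition induced_edges (n : nat) (EH : {set {set 'I_n}}) (I : {set 'I_n}) :=
  [set e in EH | e \subset I].

Definition PQH {R : realType} (s n : nat) (EQ : {set {set 'I_s}})
  (EH : {set {set 'I_n}}) (x : 'I_n -> R) : R :=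
  (s`!)%:R * \sum_(I : {set 'I_n} | #|I| == s)
     (Ncopies EQ I (induced_edges EH I))%:R * \prod_(i in I) x i.

Definition pnorm {R : realType} (n : nat) (p : R) (x : 'I_n -> R) : R :=
  (\sum_(i < n) `|x i| `^ p) `^ p^-1.

(* lambda^(p)(Q,H) = max_{||x||_p = 1} P_{Q,H}(x)  (the max is attained, by
   compactness; we take the supremum of the set of values). *)
Definition lambdaQH {R : realType} (s n : nat) (EQ : {set {set 'I_s}})
  (EH : {set {set 'I_n}}) (p : R) : R :=
  sup [set y | exists x : 'I_n -> R, pnorm p x = 1 /\ y = PQH EQ EH x]%classic.

Definition fQH {R : realType} (s n : nat) (EQ : {set {set 'I_s}})
  (EH : {set {set 'I_n}}) (p : R) : R :=
  (lambdaQH EQ EH p / ((s`!)%:R * (NQH EQ EH)%:R)) `^ p.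

(* Main.v *)
Require Import Defs.
From HB Require Import structures.
From mathcomp Require Import all_boot all_order all_algebra.
From mathcomp Require Import all_classical all_reals all_analysis.
From mathcomp Require Import ring lra.
Import Order.TTheory GRing.Theory Num.Theory.
Local Open Scope ring_scope.


Lemma tangent {R : realType} (a z m : R) : 1 <= a -> 0 <= z -> 0 < m ->
  m `^ a + a * m `^ (a - 1) * (z - m) <= z `^ a.
Proof.
move=> a1 z0 m0.
have a0 : 0 < a by apply: lt_le_trans a1.
have mm : m * m `^ (a - 1) = m `^ a by rewrite mulr_powRB1 // ltW.
have [->|an1] := eqVneq a 1.
  rewrite subrr powRr0 (powRr1 (ltW m0)) (powRr1 z0); lra.
have a1' : 1 < a by rewrite lt_neqAle eq_sym an1.
set q := a / (a - 1).
have am0 : 0 < a - 1 by rewrite subr_gt0.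
have q0 : 0 < q by rewrite divr_gt0.
have pq : a^-1 + q^-1 = 1.
  rewrite /q invf_div; by field; rewrite gt_eqF.
have Y := @conjugate_powR R z (m `^ (a - 1)) a q z0 (powR_ge0 _ _) a0 q0 pq.
rewrite -powRrM in Y.
have e : (a - 1) * q = a by rewrite /q mulrCA mulfV ?gt_eqF // mulr1.
rewrite e in Y.
have Y2 : a * (z * m `^ (a - 1)) <= z `^ a + (a - 1) * m `^ a.
  have := ler_wpM2l (ltW a0) Y.
  have -> : a * (z `^ a / a + m `^ a / q) = z `^ a + (a - 1) * m `^ a.
    by rewrite /q; field; rewrite !gt_eqF.
  by [].
rewrite -mm.
rewrite -mm in Y2.
set u := m `^ (a - 1) in Y2 *.
have u0 : 0 <= u by exact: powR_ge0.
nra.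
Qed.

Lemma jensen {R : realType} (I : finType) (P : pred I) (w z : I -> R) (N a : R) :
  1 <= a -> 0 < N -> (forall i, 0 <= w i) -> (forall i, 0 <= z i) ->
  \sum_(i | P i) w i <= N ->
  N * ((\sum_(i | P i) w i * z i) / N) `^ a <= \sum_(i | P i) w i * z i `^ a.
Proof.
move=> a1 N0 w0 z0 WN.
have a0 : 0 < a by apply: lt_le_trans a1.
set S := \sum_(i | P i) w i * z i.
set W := \sum_(i | P i) w i.
have S0 : 0 <= S by apply: sumr_ge0 => i _; rewrite mulr_ge0.
have rhs0 : 0 <= \sum_(i | P i) w i * z i `^ a.
  by apply: sumr_ge0 => i _; rewrite mulr_ge0 // powR_ge0.
have [S00|Sp] := eqVneq S 0.
  by rewrite S00 mul0r powR0 ?gt_eqF // mulr0.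
have Sp' : 0 < S by rewrite lt_neqAle eq_sym Sp.
set m := S / N.
have m0 : 0 < m by rewrite divr_gt0.
have step : \sum_(i | P i) w i * (m `^ a + a * m `^ (a - 1) * (z i - m))
            <= \sum_(i | P i) w i * z i `^ a.
  by apply: ler_sum => i _; apply: ler_wpM2l => //; apply: tangent.
apply: le_trans step.
have -> : \sum_(i | P i) w i * (m `^ a + a * m `^ (a - 1) * (z i - m))
   = (m `^ a - a * m `^ (a - 1) * m) * W + a * m `^ (a - 1) * S.
  rewrite /W /S !mulr_sumr -big_split /=.
  by apply: eq_bigr => i _; ring.
have mm : m * m `^ (a - 1) = m `^ a by rewrite mulr_powRB1 // ltW.
have SN : S = N * m by rewrite /m mulrC divfK // gt_eqF.
rewrite SN.
have -> : a * m `^ (a - 1) * m = a * m `^ a by rewrite -mm; ring.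
have -> : a * m `^ (a - 1) * (N * m) = a * N * m `^ a by rewrite -mm; ring.
have ma0 : 0 <= m `^ a by exact: powR_ge0.
have h : 0 <= (a - 1) * (N - W) by rewrite mulr_ge0 // subr_ge0.
move: ma0 h; move: (m `^ a) => t; clearbody W; nra.
Qed.

Lemma prod_powR {R : realType} (I : finType) (P : pred I) (F : I -> R) (a : R) :
  (forall i, 0 <= F i) ->
  \prod_(i | P i) (F i `^ a) = (\prod_(i | P i) F i) `^ a.
Proof.
move=> F0.
suff [] : 0 <= \prod_(i | P i) F i /\ \prod_(i | P i) (F i `^ a) = (\prod_(i | P i) F i) `^ a by [].
apply: (big_rec2 (fun y1 y2 => 0 <= y2 /\ y1 = y2 `^ a)) => [|i y1 y2 _ [y20 ->]].
  by split => //; rewrite powR1.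
by split; [rewrite mulr_ge0 | rewrite powRM].
Qed.

Lemma sum_Ncopies_le (s n : nat) (EQ : {set {set 'I_s}}) (EH : {set {set 'I_n}}) :
  (\sum_(I : {set 'I_n} | #|I| == s) Ncopies EQ I (induced_edges EH I)
     <= NQH EQ EH)%N.
Proof.
rewrite /NQH /Ncopies.
set S := [set copy_of EQ phi | phi : {ffun 'I_s -> 'I_n} & _].
rewrite -sum1_card (partition_big (fun c => c.1) predT) //=.
apply: (@leq_trans (\sum_(I : {set 'I_n} | #|I| == s)
     \sum_(c | (c \in S) && (c.1 == I)) 1)).
  apply: leq_sum => I /eqP hI.
  rewrite sum1dep_card; apply: subset_leq_card.
  apply/fintype.subsetP => c.
  case/imsetP => phi H ->; move: H; rewrite !inE => /andP[inj /andP[sub ed]].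
  apply/andP; split.
    apply/imsetP; exists phi => //; rewrite !inE inj finset.subsetT /=.
    apply/forall_inP => e eE; move/forall_inP: ed => /(_ e eE).
    by rewrite !inE => /andP[].
  rewrite /= eqEcard sub hI card_imset ?cardsT ?card_ord //.
    by rewrite leqnn.
  exact/injectiveP.
rewrite [X in (_ <= X)%N](bigID (fun I : {set 'I_n} => #|I| == s)) /=.
exact: leq_addr.
Qed.

Lemma pnorm1 {R : realType} (n : nat) (p : R) (x : 'I_n -> R) :
  0 < p -> pnorm p x = 1 -> \sum_(i < n) `|x i| `^ p = 1.
Proof.
rewrite /pnorm => p0 h.
set T := \sum_(i < n) _ in h *.
have T0 : 0 <= T by apply: sumr_ge0 => i _; exact: powR_ge0.
rewrite -(powRr1 T0) -{1}(@mulVf _ p (lt0r_neq0 p0)) powRrM h.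
by rewrite powR1.
Qed.
Arguments pnorm1 {R n p x}.

Lemma coord_le1 {R : realType} (n : nat) (p : R) (x : 'I_n -> R) :
  0 < p -> pnorm p x = 1 -> forall i, `|x i| <= 1.
Proof.
move=> p0 h i; have S1 := pnorm1 p0 h.
have le : `|x i| `^ p <= 1.
  rewrite -S1 (bigD1 i) //= lerDl; apply: sumr_ge0 => j _; exact: powR_ge0.
rewrite leNgt; apply/negP => lt1.
have := @gt0_ltr_powR R p p0 1 `|x i|; rewrite !nnegrE ler01 normr_ge0 powR1.
by move=> /(_ isT isT lt1); rewrite ltNge le.
Qed.
Arguments coord_le1 {R n p x}.

Lemma P_le_abs {R : realType} (s n : nat) (EQ : {set {set 'I_s}})
  (EH : {set {set 'I_n}}) (x : 'I_n -> R) :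
  PQH EQ EH x <= (s`!)%:R * \sum_(I : {set 'I_n} | #|I| == s)
     (Ncopies EQ I (induced_edges EH I))%:R * \prod_(i in I) `|x i|.
Proof.
rewrite /PQH; apply: le_trans (ler_norm _) _.
rewrite normrM ger0_norm ?ler0n //; apply: ler_wpM2l => //.
apply: le_trans (ler_norm_sum _ _ _) _.
apply: ler_sum => I _; rewrite normrM ger0_norm ?ler0n //.
by rewrite normr_prod.
Qed.
Arguments P_le_abs {R s n EQ EH}.

Lemma P_bound {R : realType} (s n : nat) (EQ : {set {set 'I_s}})
  (EH : {set {set 'I_n}}) (p : R) (x : 'I_n -> R) :
  0 < p -> pnorm p x = 1 ->
  PQH EQ EH x <= (s`!)%:R * \sum_(I : {set 'I_n} | #|I| == s)
     (Ncopies EQ I (induced_edges EH I))%:R.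
Proof.
move=> p0 h; apply: le_trans (P_le_abs x) _.
apply: ler_wpM2l => //; apply: ler_sum => I _.
rewrite -[X in _ <= X]mulr1; apply: ler_wpM2l => //.
apply: prodr_ile1 => i _; rewrite normr_ge0 /=; exact: coord_le1 p0 h i.
Qed.
Arguments P_bound {R s n EQ EH p x}.

Lemma has_ub_S {R : realType} (s n : nat) (EQ : {set {set 'I_s}})
  (EH : {set {set 'I_n}}) (p : R) : 0 < p ->
  has_ubound [set y | exists x : 'I_n -> R, pnorm p x = 1 /\ y = PQH EQ EH x]%classic.
Proof.
move=> p0; exists ((s`!)%:R * \sum_(I : {set 'I_n} | #|I| == s)
     (Ncopies EQ I (induced_edges EH I))%:R).
by move=> y [x [hx ->]]; exact: P_bound p0 hx.
Qed.
Arguments has_ub_S {R s n} EQ EH {p}.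

Theorem lemma2p2 (R : realType) (r s n : nat)
  (EQ : {set {set 'I_s}}) (EH : {set {set 'I_n}}) :
  (2 <= r)%N -> (r <= s)%N -> (s <= n)%N ->
  is_rgraph r EQ -> is_rgraph r EH ->
  (0 < NQH EQ EH)%N ->
  forall p q : R, 1 <= p -> p <= q -> fQH EQ EH q <= fQH EQ EH p.
Proof.
move=> r2 rs sn _ _ N0 p q p1 pq.
pose c := (s`!)%:R : R.
pose Nr := (NQH EQ EH)%:R : R.
have c0 : 0 < c by rewrite /c ltr0n fact_gt0.
have Nr0 : 0 < Nr by rewrite /c ltr0n.
have K0 : 0 < c * Nr by rewrite mulr_gt0.
have p0 : 0 < p by apply: lt_le_trans p1.
have q0 : 0 < q by apply: lt_le_trans pq.
pose a := q / p.
have a1 : 1 <= a by rewrite /a ler_pdivlMr // mul1r.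
have a0 : 0 < a by apply: lt_le_trans a1.
pose A := lambdaQH EQ EH p / (c * Nr).
have key : forall x, pnorm q x = 1 -> PQH EQ EH x <= c * Nr * A `^ a^-1.
  move=> x hx.
  pose z := fun I : {set 'I_n} => \prod_(i in I) `|x i|.
  pose w := fun I : {set 'I_n} => (Ncopies EQ I (induced_edges EH I))%:R : R.
  pose S := \sum_(I : {set 'I_n} | #|I| == s) w I * z I.
  have PS : PQH EQ EH x <= c * S := P_le_abs x.
  have S0 : 0 <= S.
    apply: sumr_ge0 => I _; rewrite mulr_ge0 ?ler0n //.
    by apply: prodr_ge0 => i _.
  pose y := fun i => `|x i| `^ a.
  have hy : pnorm p y = 1.
    rewrite /pnorm (eq_bigr (fun i => `|x i| `^ q)).
      by rewrite (pnorm1 q0 hx) powR1.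
    move=> i _; rewrite /y ger0_norm ?powR_ge0 // -powRrM /a divfK //.
    exact: lt0r_neq0.
  have Py : PQH EQ EH y <= lambdaQH EQ EH p.
    by rewrite /lambdaQH; apply: (ub_le_sup (has_ub_S EQ EH p0)); exists y; split.
  have PyE : PQH EQ EH y = c * \sum_(I : {set 'I_n} | #|I| == s) w I * z I `^ a.
    rewrite /PQH; congr (_ * _); apply: eq_bigr => I _.
    by rewrite /y /z prod_powR.
  have WN : \sum_(I : {set 'I_n} | #|I| == s) w I <= Nr.
    by rewrite /w -natr_sum ler_nat sum_Ncopies_le.
  have zp : forall I, 0 <= z I by move=> I; apply: prodr_ge0 => i _.
  have J := @jensen R _ (fun I : {set 'I_n} => #|I| == s) w z Nr a a1 Nr0
    (fun I => ler0n _ _) zp WN.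
  have hA : (S / Nr) `^ a <= A.
    rewrite /A ler_pdivlMr //; apply: le_trans Py.
    rewrite PyE mulrCA; apply: ler_wpM2l; first exact: ltW.
    by rewrite mulrC.
  have t0 : 0 <= S / Nr by rewrite divr_ge0 // ltW.
  have hS : S / Nr <= A `^ a^-1.
    rewrite -{1}(powRr1 t0) -{1}(@mulfV _ a (lt0r_neq0 a0)) powRrM.
    apply: ge0_ler_powR => //.
    - by rewrite invr_ge0 ltW.
    - by rewrite nnegrE powR_ge0.
    by rewrite nnegrE (le_trans _ hA) // powR_ge0.
  apply: le_trans PS _.
  clearbody S A Nr c.
  have eS : Nr * (S / Nr) = S by rewrite mulrC divfK // lt0r_neq0.
  rewrite -mulrA -eS; apply: ler_wpM2l; first exact: ltW.
  by apply: ler_wpM2l; first exact: ltW.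
have n0 : (0 < n)%N := leq_trans (leq_trans (isT : (0 < 2)%N) r2) (leq_trans rs sn).
pose i0 : 'I_n := Ordinal n0.
pose e := fun i : 'I_n => ((i == i0)%:R : R).
have he : pnorm q e = 1.
  rewrite /pnorm (bigD1 i0) //= big1 => [|i ni]; last first.
    by rewrite /e (negbTE ni) normr0 powR0 // lt0r_neq0.
  by rewrite /e eqxx normr1 powR1 /= addr0 powR1.
have ubq := has_ub_S EQ EH q0.
have lq0 : 0 <= lambdaQH EQ EH q.
  rewrite /lambdaQH; apply: le_trans (ub_le_sup ubq _); last by exists e; split.
  rewrite /PQH mulr_ge0 ?ler0n // sumr_ge0 // => I _.
  by rewrite mulr_ge0 ?ler0n // prodr_ge0 // => i _; rewrite /e ler0n.
have lqle : lambdaQH EQ EH q <= c * Nr * A `^ a^-1.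
  rewrite /lambdaQH; apply: ge_sup; first by exists (PQH EQ EH e); exists e.
  by move=> y [x [hx ->]]; exact: key.
have ea : a^-1 * q = p by rewrite /a invf_div divfK // lt0r_neq0.
suff fin : (lambdaQH EQ EH q / (c * Nr)) `^ q <= A `^ p by exact: fin.
move: lqle lq0; set L := lambdaQH EQ EH q; clearbody L A a c Nr => lqle lq0.
rewrite -ea powRrM.
apply: ge0_ler_powR; first exact: ltW.
- by rewrite nnegrE divr_ge0 // ltW.
- by rewrite nnegrE powR_ge0.
by rewrite ler_pdivrMr // mulrC.
Qed.
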